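(* Let $A$ be a real $2\times 2$ matrix and $B$ a real $1\times 2$ matrix, and let $\mathrm{NT}=\{\vec{x}\in\mathbb{R}^2 : BA^k\vec{x}>0 \text{ for all integers } k\ge 0\}$. Suppose $A$ has a positive eigenvalue $\lambda_1$ and a negative eigenvalue $\lambda_2$ with $\lambda_1\ge|\lambda_2|$, with eigenvectors $\vec{\beta}_1,\vec{\beta}_2$ respectively, such that $B\vec{\beta}_1>0$ and $B\vec{\beta}_2>0$. Let $\vec{\alpha}\in\mathbb{R}^2$ satisfy $B\vec{\alpha}=0$ and $BA\vec{\alpha}>0$, and let $\vec{\alpha}_{-1}=A^{-1}\vec{\alpha}$. Then $\mathrm{NT}=\{k_1\vec{\alpha}+k_2\vec{\alpha}_{-1}: k_1>0,\ k_2>0\}$.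
   Context: $\mathrm{NT}$ is the non-termination set of the loop ''while $(B\vec{x}>0)$ $\{\vec{x}:=A\vec{x}\}$''. *)

(* Defs.v *)
From HB Require Import structures.
From mathcomp Require Import all_boot all_order all_algebra.
Set Implicit Arguments. Unset Strict Implicit. Unset Printing Implicit Defensive.
Import Order.TTheory GRing.Theory Num.Theory.
Local Open Scope ring_scope.

Definition scal1 (R : nzRingType) (M : 'M[R]_1) : R := M 0 0.

(* Non-termination set of  while (B x > 0) { x := A x }:
   NT = { x | B A^k x > 0 for all k >= 0 }. *)
Definition NT (R : realFieldType) (A : 'M[R]_2) (B : 'M[R]_(1,2)) (x : 'cV[R]_2) : Prop :=
  forall k : nat, 0 < scal1 (B *m (A ^+ k *m x)).

Definition is_eigvec (R : realFieldType) (A : 'M[R]_2) (lam : R) (beta : 'cV[R]_2) : Prop :=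
  beta != 0 /\ A *m beta = lam *: beta.

(* Main.v *)
Require Import Defs.
From HB Require Import structures.
From mathcomp Require Import all_boot all_order all_algebra.
From mathcomp Require Import ring lra.
Import Order.TTheory GRing.Theory Num.Theory.
Local Open Scope ring_scope.
Section S.
Variable R : realFieldType.
Lemma w0 : widen_ord (leqnSn 1) ord0 = 0 :> 'I_2. Proof. exact/val_inj. Qed.
Lemma om1 : ord_max = 1 :> 'I_2. Proof. exact/val_inj. Qed.
Lemma mxv_entry (A : 'M[R]_2) (v : 'cV[R]_2) i :
  (A *m v) i 0 = A i 0 * v 0 0 + A i 1 * v 1 0.
Proof. by rewrite mxE big_ord_recr big_ord1 /= w0 om1. Qed.
Lemma det22 (A : 'M[R]_2) : \det A = A 0 0 * A 1 1 - A 0 1 * A 1 0.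
Proof.
rewrite (expand_det_row _ 0) big_ord_recr big_ord1 /= w0 om1 /cofactor !det_mx11 !mxE /=.
have l0 : lift (0:'I_2) (0:'I_1) = 1 by exact/val_inj.
have l1 : lift (1:'I_2) (0:'I_1) = 0 by exact/val_inj.
rewrite l0 l1 /= expr0 expr1; ring. Qed.

Lemma seq_pos (l m u v : R) : 0 < l -> m < 0 -> `|m| <= l ->
 (forall k, 0 < u  *  l^+k + v  *  m^+k) <-> (0 < u+v /\ 0 < u * l + v * m).
Proof.
move=> hl hm hml; split.
  by move=> H; split; [have := H 0%N | have := H 1%N]; rewrite ?expr0 ?expr1 ?mulr1.
move=> [h0 h1].
set n := - m.
have hn : 0 < n by rewrite /n oppr_gt0.
have hnl : n <= l by rewrite /n -ltr0_norm.
have em : m = - n by rewrite /n opprK.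
rewrite em in h1.
have key : forall j, 0 < u * l^+(j.*2) + v * m^+(j.*2) /\ 0 < u * l^+(j.*2).+1 + v * m^+(j.*2).+1.
  move=> j; rewrite !exprS em -mul2n !exprM sqrrN -!exprM.
  have hN : 0 < n^+(2 * j) by rewrite exprn_gt0.
  have hNL : n^+(2 * j) <= l^+(2 * j) by rewrite lerXn2r // nnegrE ltW.
  move: hN hNL; set N := n^+(2 * j); set L := l^+(2 * j) => hN hNL.
  have [hv|hv] := lerP 0 v.
    have hL : 0 < L by apply: lt_le_trans hNL.
    have hu : 0 < u by nra.
    have a : u * l * N <= u * l * L by rewrite ler_pM2l // mulr_gt0.
    have b : v * n * N < u * l * N by rewrite ltr_pM2r //; lra.
    split; first by nra.
    lra.
  have hL : 0 < L by apply: lt_le_trans hNL.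
  have hu : 0 < u by lra.
  have a : (- v) * N <= (- v) * L by rewrite ler_pM2l // oppr_gt0.
  have b : (- v) * L < u * L by rewrite ltr_pM2r //; lra.
  split; first by lra.
  have c : 0 < u * (l * L) by rewrite !mulr_gt0.
  have d : 0 <= (- v) * (n * N) by rewrite mulr_ge0 // ?oppr_ge0 ?ltW // mulr_gt0.
  lra.
move=> k; rewrite -(odd_double_half k); case: (odd k) (key k./2) => [[_ H]|[H _]].
  by rewrite add1n.
by rewrite add0n.
Qed.

Definition d2 (v w : 'cV[R]_2) := v 0 0 * w 1 0 - v 1 0 * w 0 0.

Lemma cvP (v w : 'cV[R]_2) : v 0 0 = w 0 0 -> v 1 0 = w 1 0 -> v = w.
Proof.
move=> h0 h1; apply/matrixP => i j; rewrite (ord1 j).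
case: i => [[|[|//]]] Hi.
  by rewrite (_ : Ordinal Hi = 0); [|exact/val_inj].
by rewrite (_ : Ordinal Hi = 1); [|exact/val_inj].
Qed.

Lemma dA (A : 'M[R]_2) v w : d2 (A *m v) (A *m w) = \det A * d2 v w.
Proof. by rewrite /d2 !mxv_entry det22; ring. Qed.

Lemma decomp v w x : d2 v w != 0 ->
  x = (d2 x w / d2 v w) *: v + (d2 v x / d2 v w) *: w.
Proof.
move=> nz; apply: cvP; rewrite !mxE; move: nz; rewrite /d2 => nz; field; exact: nz.
Qed.

Lemma indep (A : 'M[R]_2) l1 l2 b1 b2 : is_eigvec A l1 b1 -> is_eigvec A l2 b2 ->
  l1 != l2 -> d2 b1 b2 != 0.
Proof.
move=> [nz1 e1] [nz2 e2] nl; apply/negP => /eqP H.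
suff [c hc] : exists c, b2 = c *: b1.
  have : (l1 - l2) *: b2 = 0.
    have e3 : A *m b2 = l1 *: b2 by rewrite hc -scalemxAr e1 scalerA mulrC -scalerA.
    by rewrite scalerBl -e2 -e3 subrr.
  by move/eqP; rewrite scaler_eq0 subr_eq0 (negbTE nl) (negbTE nz2).
move: H; rewrite /d2 => H.
have [h0|h0] := eqVneq (b1 0 0) 0.
  have h1 : b1 1 0 != 0.
    apply/negP => /eqP h1; move/negP: nz1; apply; apply/eqP; apply: cvP; by rewrite mxE.
  exists (b2 1 0 / b1 1 0); apply: cvP; rewrite !mxE ?h0.
    rewrite mulr0; apply: (mulfI h1); rewrite mulr0; move: H; rewrite h0 mul0r; lra.
  by rewrite divfK.
exists (b2 0 0 / b1 0 0); apply: cvP; rewrite !mxE.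
  by rewrite divfK.
apply: (mulIf h0); rewrite mulrAC divfK //; lra.
Qed.

Lemma powv (A : 'M[R]_2) l (b : 'cV[R]_2) : A *m b = l *: b -> forall k, A ^+ k *m b = l ^+ k *: b.
Proof.
move=> e; elim=> [|k IH]; first by rewrite expr0 mul1mx scale1r.
by rewrite exprS -mulmxE -mulmxA IH -scalemxAr e scalerA exprS mulrC.
Qed.
End S.
Arguments indep {R A l1 l2 b1 b2}.
Arguments seq_pos {R l m u v}.
Arguments powv {R A l b}.
Arguments decomp {R v w x}.
Arguments dA {R}.
Arguments d2 {R}.

Theorem lemma9 (R : realFieldType) (A : 'M[R]_2) (B : 'M[R]_(1,2))
  (lam1 lam2 : R) (beta1 beta2 alpha : 'cV[R]_2)
  (hl1 : 0 < lam1) (hl2 : lam2 < 0) (hl12 : `|lam2| <= lam1)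
  (hb1 : is_eigvec A lam1 beta1) (hb2 : is_eigvec A lam2 beta2)
  (hBb1 : 0 < scal1 (B *m beta1)) (hBb2 : 0 < scal1 (B *m beta2))
  (hBa : scal1 (B *m alpha) = 0) (hBAa : 0 < scal1 (B *m (A *m alpha))) :
  forall x : 'cV[R]_2,
    NT A B x <->
    exists k1 k2 : R, 0 < k1 /\ 0 < k2 /\
      x = k1 *: alpha + k2 *: (invmx A *m alpha).
Proof.
move=> x.
have nl : lam1 != lam2 by rewrite gt_eqF // (lt_trans hl2 hl1).
have D := indep hb1 hb2 nl.
have Bk : forall c1 c2 k, scal1 (B *m (A ^+ k *m (c1 *: beta1 + c2 *: beta2)))
    = c1 * scal1 (B *m beta1) * lam1 ^+ k + c2 * scal1 (B *m beta2) * lam2 ^+ k.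
  move=> c1 c2 k; rewrite mulmxDr -!scalemxAr (powv hb1.2) (powv hb2.2) !scalerA.
  rewrite mulmxDr -!scalemxAr /scal1 !mxE; ring.
move: Bk hBb1 hBb2; set b1 := scal1 (B *m beta1); set b2 := scal1 (B *m beta2).
move=> Bk hBb1 hBb2.
have span : forall y, exists c1 c2, y = c1 *: beta1 + c2 *: beta2.
  by move=> y; exists (d2 y beta2 / d2 beta1 beta2), (d2 beta1 y / d2 beta1 beta2); exact: decomp D.
have NTiff : forall c1 c2, NT A B (c1 *: beta1 + c2 *: beta2) <->
    0 < c1 * b1 + c2 * b2 /\ 0 < c1 * b1 * lam1 + c2 * b2 * lam2.
  move=> c1 c2; split => [H|H].
    by apply/(seq_pos hl1 hl2 hl12) => k; rewrite -Bk; exact: H.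
  move=> k; rewrite Bk; move: k; exact/(seq_pos hl1 hl2 hl12).
have [a1 [a2 ea]] := span alpha.
have h0 : 0 = a1 * b1 + a2 * b2.
  by have := Bk a1 a2 0%N; rewrite !expr0 mul1mx -ea hBa !mulr1.
have h1 : 0 < a1 * b1 * lam1 + a2 * b2 * lam2.
  by have := Bk a1 a2 1%N; rewrite !expr1 -ea => <-.
have e2 : a2 * b2 = - (a1 * b1) by lra.
rewrite e2 in h1.
have hw' : 0 < a1 * b1 * (lam1 - lam2) by rewrite mulrBr; lra.
have hl : 0 < lam1 - lam2 by lra.
have hw : 0 < a1 * b1 by nra.
have b1nz : b1 != 0 by rewrite gt_eqF.
have b2nz : b2 != 0 by rewrite gt_eqF.
have l1nz : lam1 != 0 by rewrite gt_eqF.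
have l2nz : lam2 != 0 by rewrite lt_eqF.
have lnz : lam1 - lam2 != 0 by rewrite gt_eqF.
have lnz' : lam2 - lam1 != 0 by rewrite lt_eqF // subr_lt0 (lt_trans hl2 hl1).
have a1nz : a1 != 0 by apply/negP => /eqP a0; move: hw; rewrite a0 mul0r ltxx.
have ha2 : a2 = - (a1 * b1) / b2 by apply: (mulIf b2nz); rewrite divfK.
pose gamma := (a1 / lam1) *: beta1 + (a2 / lam2) *: beta2.
have Ag : A *m gamma = alpha.
  by rewrite mulmxDr -!scalemxAr hb1.2 hb2.2 !scalerA !divfK // ea.
have uA : A \in unitmx.
  rewrite unitmxE unitfE; apply/negP => /eqP d0.
  have := dA A beta1 beta2; rewrite hb1.2 hb2.2 d0 mul0r /d2 !mxE => E.
  have E' : lam1 * lam2 * d2 beta1 beta2 = 0 by rewrite -E /d2; ring.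
  by move/eqP: E'; rewrite !mulf_eq0 (negbTE l1nz) (negbTE l2nz) (negbTE D).
have ig : invmx A *m alpha = gamma by rewrite -Ag mulKmx.
rewrite ig.
have combo : forall k1 k2, k1 *: alpha + k2 *: gamma =
    (k1 * a1 + k2 * (a1 / lam1)) *: beta1 + (k1 * a2 + k2 * (a2 / lam2)) *: beta2.
  by move=> k1 k2; rewrite ea !scalerDr !scalerA !scalerDl addrACA.
split.
  case: (span x) => c1 [c2 ex]; rewrite ex NTiff => -[p0 p1].
  exists ((c1 * b1 * lam1 + c2 * b2 * lam2) / (a1 * b1 * (lam1 - lam2))).
  exists ((c1 * b1 + c2 * b2) * (lam1 * (- lam2)) / (a1 * b1 * (lam1 - lam2))).
  split; first by rewrite divr_gt0 // mulr_gt0.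
  split; first by apply: divr_gt0; [apply: mulr_gt0 => //; apply: mulr_gt0 => //; rewrite oppr_gt0 | apply: mulr_gt0].
  rewrite combo; congr (_ *: _ + _ *: _); rewrite ?ha2; field; by rewrite ?l1nz ?l2nz ?lnz ?lnz' ?b1nz ?b2nz ?a1nz.
move=> [k1 [k2 [p1 [p2 ->]]]]; rewrite combo NTiff; split.
  have E1 : (k1 * a1 + k2 * (a1 / lam1)) * b1 + (k1 * a2 + k2 * (a2 / lam2)) * b2
     = k2 * (a1 * b1) * ((lam1 - lam2) / (lam1 * (- lam2))) by rewrite ha2; field; by rewrite ?l1nz ?l2nz ?lnz ?lnz' ?b1nz ?b2nz ?a1nz.
  by rewrite E1; apply: mulr_gt0; [exact: mulr_gt0 | apply: divr_gt0 => //; apply: mulr_gt0 => //; rewrite oppr_gt0].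
have E1 : (k1 * a1 + k2 * (a1 / lam1)) * b1 * lam1 + (k1 * a2 + k2 * (a2 / lam2)) * b2 * lam2
   = k1 * (a1 * b1) * (lam1 - lam2) by rewrite ha2; field; by rewrite ?l1nz ?l2nz ?lnz ?lnz' ?b1nz ?b2nz ?a1nz.
by rewrite E1; apply: mulr_gt0 => //; exact: mulr_gt0.
Qed.
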